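(* Let $K \ge 1$ be an integer, let $x$ be a sample point, and let $\hat{\pi}(x) = (\hat{\pi}_1(x), \dots, \hat{\pi}_K(x))$ be a probability vector on the classes $[K] = \{1,\dots,K\}$. Let $\hat{\pi}_{(1)}(x) \ge \hat{\pi}_{(2)}(x) \ge \cdots \ge \hat{\pi}_{(K)}(x)$ be its entries sorted in decreasing order, and for $i \in [K]$ let $V(\hat{\pi}(x), i) = \sum_{j=1}^{i} \hat{\pi}_{(j)}(x)$. Define the average non-conformity score $$\bar{V}(\hat{\pi}(x)) = \frac{1}{K}\sum_{i=1}^K V(\hat{\pi}(x), i)$$ and the entropy $H(\hat{\pi}(x)) = -\sum_{k=1}^K \hat{\pi}_k(x)\log \hat{\pi}_k(x)$ (with $0\log 0 = 0$). Then $$\bar{V}(\hat{\pi}(x)) \le \min\big(C_K + 1 - H(\hat{\pi}(x)),\; 1 + H(\hat{\pi}(x))\big),$$ where $C_K = \log\Big(\sum_{k=1}^K \exp\big(-\tfrac{k-1}{K}\big)\Big)$.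
   Context: $V(\hat{\pi}(x), i)$ is the Adaptive Prediction Sets (APS) non-conformity score associated with the $i$-th ranked class: the cumulative sum of the sorted predicted probabilities from the most likely class down to the class of rank $i$. *)

(* Defs.v *)
From mathcomp Require Import all_boot all_order all_algebra.
From mathcomp Require Import all_classical all_reals all_analysis.
Set Implicit Arguments. Unset Strict Implicit. Unset Printing Implicit Defensive.
Import Order.TTheory GRing.Theory Num.Theory.
Local Open Scope ring_scope.

Definition prob_vec (R : realType) (K : nat) (p : 'I_K -> R) : Prop :=
  (forall k, 0 <= p k) /\ \sum_(k < K) p k = 1.

Definition sorted_desc (R : realType) (K : nat) (p : 'I_K -> R) : seq R :=
  sort (fun a b : R => b <= a) [seq p k | k <- enum 'I_K].

Definition V (R : realType) (K : nat) (p : 'I_K -> R) (i : nat) : R :=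
  \sum_(0 <= j < i) nth 0 (sorted_desc p) j.

Definition Vbar (R : realType) (K : nat) (p : 'I_K -> R) : R :=
  K%:R^-1 * \sum_(1 <= i < K.+1) V p i.

Definition xlogx (R : realType) (x : R) : R := if x == 0 then 0 else x * ln x.

Definition entropy (R : realType) (K : nat) (p : 'I_K -> R) : R :=
  - \sum_(k < K) xlogx (p k).

Definition C_K (R : realType) (K : nat) : R :=
  ln (\sum_(1 <= k < K.+1) expR (- ((k.-1)%:R / K%:R))).

(* Main.v *)
Require Import Defs.
From mathcomp Require Import all_boot all_order all_algebra.
From mathcomp Require Import all_classical all_reals all_analysis.
From mathcomp Require Import ring lra.
Import Order.TTheory GRing.Theory Num.Theory.
Local Open Scope ring_scope.

Lemma double_sum (R : realType) (q : nat -> R) n :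
  \sum_(1 <= i < n.+1) \sum_(0 <= j < i) q j = \sum_(0 <= j < n) (n - j)%:R * q j.
Proof.
elim: n => [|n IH]; first by rewrite !big_geq.
rewrite big_nat_recr //= IH.
have -> : \sum_(0 <= j < n) (n - j)%:R * q j = \sum_(0 <= j < n.+1) (n - j)%:R * q j.
  by rewrite big_nat_recr //= subnn mul0r addr0.
rewrite -big_split /=; apply: eq_big_nat => j /andP[_ hj].
by rewrite subSn // -[(n - j).+1]addn1 natrD mulrDl mul1r.
Qed.

Lemma term_bound (R : realType) (q a Z : R) : 0 <= q -> 0 < Z ->
  q * a - xlogx q - q * ln Z <= expR a / Z - q.
Proof.
move=> q0 Z0; rewrite /xlogx.
have eZ : 0 <= expR a / Z by rewrite divr_ge0 ?expR_ge0 ?ltW.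
case: eqP => [->|/eqP qn0]; first by rewrite !mul0r !subr0.
have qp : 0 < q by rewrite lt_neqAle eq_sym qn0.
have h := expR_ge1Dx (a - ln q - ln Z).
rewrite !expRD !expRN !lnK ?posrE // in h.
have h2 := ler_wpM2l (ltW qp) h.
have e : q * (expR a / q / Z) = expR a / Z by by field; rewrite gt_eqF.
rewrite e in h2; move: h2; rewrite mulrDr mulr1 !mulrBr. lra.
Qed.

Lemma gibbs (R : realType) n (q a : nat -> R) :
  (forall j, 0 <= q j) -> \sum_(0 <= j < n) q j = 1 ->
  \sum_(0 <= j < n) q j * a j - \sum_(0 <= j < n) xlogx (q j)
    <= ln (\sum_(0 <= j < n) expR (a j)).
Proof.
move=> q0 q1.
set Z := \sum_(0 <= j < n) expR (a j).
have Z0 : 0 < Z.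
  case: n q1 @Z => [|n] q1 Z; first by rewrite big_geq // in q1; move: q1; lra.
  rewrite /Z big_nat_recr //=; apply: ltr_pwDr; first exact: expR_gt0.
  by apply: sumr_ge0 => *; exact: expR_ge0.
have := @ler_sum_nat _ 0 n _ _ (fun j _ => @term_bound R (q j) (a j) Z (q0 j) Z0).
rewrite !big_split /= !sumrN -mulr_suml -big_distrl /= q1 -/Z mulfV ?gt_eqF // mul1r; lra.
Qed.

Theorem proposition1 (R : realType) (K : nat) (p : 'I_K -> R) :
  (1 <= K)%N -> prob_vec p ->
  Vbar p <= Num.min (C_K R K + 1 - entropy p) (1 + entropy p).
Proof.
move=> K1 [p0 p1].
set s := sorted_desc p.
set Q := fun j => nth 0 s j.
have ss : size s = K by rewrite /s /sorted_desc size_sort size_map size_enum_ord.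
have sumQ : forall f : R -> R, \sum_(0 <= j < K) f (Q j) = \sum_(k < K) f (p k).
  move=> f; have -> : \sum_(0 <= j < K) f (Q j) = \sum_(x <- s) f x.
    by rewrite [RHS](big_nth 0) ss.
  rewrite /s /sorted_desc.
  have hp : perm_eq (sort (fun a b : R => b <= a) [seq p k | k <- enum 'I_K]) [seq p k | k <- enum 'I_K].
    by rewrite perm_sort.
  by rewrite (perm_big _ hp) big_map big_enum.
have Q0 : forall j, 0 <= Q j.
  move=> j; rewrite /Q; case: (ltnP j (size s)) => hj; last by rewrite nth_default.
  have := mem_nth 0 hj; rewrite /s /sorted_desc mem_sort => /mapP [k _ ->]; exact: p0.
have Q1 : \sum_(0 <= j < K) Q j = 1 by rewrite (sumQ id).
have KP : (0 < K%:R :> R) by rewrite ltr0n.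
have VbarE : Vbar p = 1 + \sum_(0 <= j < K) Q j * (- (j%:R / K%:R)).
  rewrite /Vbar /V double_sum -/Q big_distrr /=.
  have -> : 1 + \sum_(0 <= j < K) Q j * (- (j%:R / K%:R)) =
    \sum_(0 <= j < K) (Q j + Q j * (- (j%:R / K%:R))) by rewrite big_split /= Q1.
  apply: eq_big_nat => j /andP[_ hj].
  rewrite natrB 1?ltnW // /Q; by field; rewrite gt_eqF.
have CE : C_K R K = ln (\sum_(0 <= j < K) expR (- (j%:R / K%:R))).
  by rewrite /C_K big_add1 /=.
have HE : entropy p = - \sum_(0 <= j < K) xlogx (Q j) by rewrite /entropy sumQ.
have G := @gibbs R K Q (fun j => - (j%:R / K%:R)) Q0 Q1.
suff : Vbar p <= C_K R K + 1 - entropy p /\ Vbar p <= 1 + entropy p.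
  by case=> h1 h2; unfold Order.Def.min; case: ifP.
split.
  by rewrite VbarE CE HE; move: G; lra.
have a0 : \sum_(0 <= j < K) Q j * (- (j%:R / K%:R)) <= 0.
  rewrite -oppr_ge0 -sumrN; apply: sumr_ge0 => j _.
  by rewrite -mulrN opprK mulr_ge0 // divr_ge0.
have H0 : 0 <= entropy p.
  rewrite /entropy oppr_ge0 -oppr_ge0 -sumrN; apply: sumr_ge0 => k _.
  rewrite oppr_ge0 /xlogx; case: eqP => // _.
  rewrite mulr_ge0_le0 // ln_le0 // -p1 (bigD1 k) //= lerDl.
  by apply: sumr_ge0 => *.
rewrite VbarE; lra.
Qed.
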